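(* There is an absolute constant $C$ such that the following holds. Let $\mathcal D$ be an atomic filtration on $I_0=[0,1]$ (as described in the context) and let $f\in L^1(I_0)$. Then there exists a sparse collection $\mathcal S\subset\mathcal D$ (depending on $f$) such that $Sf(x)\le C\,S_{\mathcal S}f(x)$ for almost every $x\in I_0$.
   Context: $I_0=[0,1]$ carries a probability measure $\nu$ ($|I|=\nu(I)$). Atomic filtration: an increasing sequence of $\sigma$-algebras $\mathcal F_n$, $n\ge0$, with $\mathcal F_0$ trivial, each generated by a finite partition $\mathcal D_n$ of $I_0$ into sets of positive measure (atoms), $\mathcal D_0=\{I_0\}$; an atom is formally a pair $(I,n)$, $I\in\mathcal D_n$, and $\mathcal D=\bigcup_n\mathcal D_n$; $\mathrm{ch}(I)$ are the atoms of $\mathcal D_{n+1}$ contained in $I$. Averages $\langle f\rangle_I=|I|^{-1}\int_If\,d\nu$, $\mathbb E_If=\langle f\rangle_I\mathbf 1_I$, $\Delta_If=\sum_{I'\in\mathrm{ch}(I)}\mathbb E_{I'}f-\mathbb E_If$, $Sf=\big(\sum_{I\in\mathcal D}(\Delta_If)^2\big)^{1/2}$. A collection $\mathcal S\subset\mathcal D$ is sparse if for every $J\in\mathcal S$, $\sum_{I\in\mathrm{ch}_{\mathcal S}J}|I|\le|J|/2$, where $\mathrm{ch}_{\mathcal S}J$ denotes the maximal (by inclusion) elements of $\mathcal S$ strictly contained in $J$. Sparse square function: $S_{\mathcal S}f(x)=\big(\sum_{I\in\mathcal S}\langle|f|\rangle_I^2\mathbf 1_I(x)\big)^{1/2}$.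 *)

(* Defs.v *)
From HB Require Import structures.
From mathcomp Require Import all_boot all_order all_algebra.
From mathcomp Require Import all_classical all_reals all_analysis.
Set Implicit Arguments. Unset Strict Implicit. Unset Printing Implicit Defensive.
Import Order.TTheory GRing.Theory Num.Theory.
Local Open Scope classical_set_scope.
Local Open Scope ring_scope.

Section Defs.
Context {R : realType}.

Definition I0 : set R := `[0%R, 1%R]%classic.

Definition atomic_filtration (mu : {measure set R -> \bar R}) (D : nat -> set (set R)) : Prop :=
  D 0%N = [set I0] /\
  forall n, [/\ finite_set (D n),
                (forall I, D n I -> measurable I /\ (0 < mu I)%E),
                trivIset (D n) id,
                \bigcup_(I in D n) I = I0 &
                (forall J, D n.+1 J -> exists2 I, D n I & J `<=` I)].

Definition atoms (D : nat -> set (set R)) : set (nat * set R) := [set p | D p.1 p.2].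

Definition ch (D : nat -> set (set R)) (p : nat * set R) : set (set R) :=
  [set J | D p.1.+1 J /\ J `<=` p.2].

Definition atom_lt (p q : nat * set R) : Prop :=
  [/\ (q.1 <= p.1)%N, p.2 `<=` q.2 & p <> q].

Definition chS (S : set (nat * set R)) (J : nat * set R) : set (nat * set R) :=
  [set K | [/\ S K, atom_lt K J &
              ~ exists K', [/\ S K', atom_lt K K' & atom_lt K' J]]].

Definition sparse (mu : {measure set R -> \bar R}) (D : nat -> set (set R))
    (S : set (nat * set R)) : Prop :=
  S `<=` atoms D /\
  forall J, S J -> (\esum_(K in chS S J) mu K.2 <= (2^-1)%:E * mu J.2)%E.

Definition avg (mu : {measure set R -> \bar R}) (I : set R) (f : R -> R) : R :=
  (fine (mu I))^-1 * Rintegral mu I f.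

Definition condE (mu : {measure set R -> \bar R}) (I : set R) (f : R -> R) (x : R) : R :=
  avg mu I f * \1_I x.

Definition mdiff (mu : {measure set R -> \bar R}) (D : nat -> set (set R))
    (p : nat * set R) (f : R -> R) (x : R) : R :=
  (\sum_(J \in ch D p) condE mu J f x)%R - condE mu p.2 f x.

Definition sqfun (mu : {measure set R -> \bar R}) (D : nat -> set (set R))
    (f : R -> R) (x : R) : \bar R :=
  sqrte (\esum_(p in atoms D) ((mdiff mu D p f x) ^+ 2)%:E).

Definition sparse_sqfun (mu : {measure set R -> \bar R}) (S : set (nat * set R))
    (f : R -> R) (x : R) : \bar R :=
  sqrte (\esum_(p in S) ((avg mu p.2 (fun y => `|f y|)) ^+ 2 * \1_(p.2) x)%:E).

End Defs.

(* Main.v *)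
Require Import Defs.
From HB Require Import structures.
From mathcomp Require Import all_boot all_order all_algebra finmap.
From mathcomp Require Import all_classical all_reals all_analysis.
From mathcomp Require Import measurable_realfun.
From mathcomp Require Import ring lra.
Import Order.TTheory GRing.Theory Num.Theory.
Set Implicit Arguments. Unset Strict Implicit. Unset Printing Implicit Defensive.
Local Open Scope classical_set_scope.
Local Open Scope ring_scope.

Section Proof.
Context {R : realType} (nu : probability R R) (D : nat -> set (set R)) (f : R -> R).
Hypotheses (hD : atomic_filtration nu D) (intf : nu.-integrable I0 (EFin \o f)).

Lemma mI0 : measurable (I0 : set R).
Proof. exact: measurable_itv. Qed.

Lemma D_fin N : finite_set (D N).
Proof. by case: (hD.2 N). Qed.

Lemma D_meas N L : D N L -> measurable L.
Proof. by case: (hD.2 N) => _ h _ _ _ /h []. Qed.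

Lemma D_pos N L : D N L -> (0 < nu L)%E.
Proof. by case: (hD.2 N) => _ h _ _ _ /h []. Qed.

Lemma D_sub N L : D N L -> L `<=` I0.
Proof.
case: (hD.2 N) => _ _ _ hU _ DL x Lx; rewrite -hU; by exists L.
Qed.

Lemma D_triv N L L' x : D N L -> D N L' -> L x -> L' x -> L = L'.
Proof.
case: (hD.2 N) => _ _ ht _ _ DL DL' Lx L'x.
by apply: ht => //; exists x.
Qed.

Lemma D_cover N x : I0 x -> exists L, D N L /\ L x.
Proof.
case: (hD.2 N) => _ _ _ hU _; rewrite -hU => -[L DL Lx]; by exists L.
Qed.

Lemma D_parent N L : D N.+1 L -> exists2 I, D N I & L `<=` I.
Proof. by case: (hD.2 N) => _ _ _ _; apply. Qed.

Lemma D_fin_num N L : D N L -> nu L \is a fin_num.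
Proof.
move=> DL; rewrite ge0_fin_numE//.
apply: le_lt_trans (probability_le1 nu (D_meas DL)) _; exact: ltry.
Qed.

Definition mu L := fine (nu L).

Lemma mu_pos N L : D N L -> 0 < mu L.
Proof.
move=> DL; rewrite /mu -lte_fin fineK; [exact: D_pos DL|exact: D_fin_num DL].
Qed.

Lemma D_nonempty N L : D N L -> exists x, L x.
Proof.
move=> DL; apply/set0P/negP => /eqP L0.
by move: (D_pos DL); rewrite L0 measure0 ltxx.
Qed.

Definition at_ N x : set R := xget set0 [set L | D N L /\ L x].

Lemma at_spec N x : I0 x -> D N (at_ N x) /\ at_ N x x.
Proof. move=> /(D_cover N) h; exact: (xgetPex set0 h). Qed.

Lemma at_uniq N x L : I0 x -> D N L -> L x -> at_ N x = L.
Proof.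
move=> x0 DL Lx; have [Da ax] := at_spec N x0.
exact: D_triv Da DL ax Lx.
Qed.

Lemma at_sub1 N x : I0 x -> at_ N.+1 x `<=` at_ N x.
Proof.
move=> x0; have [Da ax] := at_spec N.+1 x0.
have [I DI sI] := D_parent Da.
by rewrite (at_uniq x0 DI (sI _ ax)).
Qed.

Lemma at_sub j N x : I0 x -> (j <= N)%N -> at_ N x `<=` at_ j x.
Proof.
move=> x0; elim: N => [|N IH]; first by rewrite leqn0 => /eqP ->; exact: subset_refl.
rewrite leq_eqVlt => /orP[/eqP ->|]; first exact: subset_refl.
rewrite ltnS => /IH.
by apply: subset_trans; exact: at_sub1.
Qed.

Lemma at_det N x y j : I0 x -> I0 y -> at_ N x = at_ N y -> (j <= N)%N ->
  at_ j x = at_ j y.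
Proof.
move=> x0 y0 e jN; have [Dj yj] := at_spec j y0.
have [_ xN] := at_spec N x0.
apply: at_uniq x0 Dj _; apply: (at_sub y0 jN); by rewrite -e.
Qed.

Lemma at_mem N x y : I0 x -> at_ N x y -> I0 y /\ at_ N y = at_ N x.
Proof.
move=> x0 h; have [Da _] := at_spec N x0.
have y0 := D_sub Da h; split => //; exact: at_uniq y0 Da h.
Qed.


Definition Ri L g := Rintegral nu L g.

Definition integ g := nu.-integrable I0 (EFin \o g).

Lemma integ_abs g : integ g -> integ (fun y => `|g y|).
Proof.
move=> ig; apply: (le_integrable mI0 _ _ ig).
  apply/measurable_EFinP.
  have h : measurable_fun [set: R] (fun x : R => `|x|) by exact: normr_measurable.
  apply: (measurableT_comp h).
  by case/integrableP: ig => /measurable_EFinP.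
by move=> x _ /=; rewrite normr_id.
Qed.

Lemma integ_cst c : integ (fun=> c).
Proof. exact: (@finite_measure_integrable_cst _ _ _ nu I0 c mI0). Qed.

Lemma integS g A : measurable A -> A `<=` I0 -> integ g -> nu.-integrable A (EFin \o g).
Proof. by move=> mA AI ig; exact: (integrableS mI0 mA AI ig). Qed.

Lemma Ri_bigU (s : seq (set R)) g : integ g -> uniq s ->
  (forall L, L \in s -> measurable L /\ L `<=` I0) ->
  (forall L L' x, L \in s -> L' \in s -> L x -> L' x -> L = L') ->
  Ri (\big[setU/set0]_(L <- s) L) g = \sum_(L <- s) Ri L g.
Proof.
move=> ig; elim: s => [|h t IH]; first by rewrite !big_nil /Ri Rintegral_set0.
move=> /= /andP[ht ut] hm htr.
have hmt : forall L, L \in t -> L \in h :: t by move=> L Lt; rewrite inE Lt orbT.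
have mt : measurable (\big[setU/set0]_(L <- t) L).
  rewrite big_seq; apply: bigsetU_measurable => L Lt.
  by case: (hm L (hmt _ Lt)).
have st : \big[setU/set0]_(L <- t) L `<=` I0.
  move=> x; rewrite -bigcup_seq => -[L /= Lt Lx].
  by case: (hm L (hmt _ Lt)) => _; apply.
have [mh sh] := hm h (mem_head _ _).
rewrite !big_cons /Ri Rintegral_setU //.
- rewrite -IH //.
  + by move=> L Lt; apply: hm; rewrite inE Lt orbT.
  + by move=> L L' x Lt L't; apply: htr; rewrite inE ?Lt ?L't orbT.
- apply: integS ig; first exact: measurableU.
  by move=> x [/sh|/st].
- apply/eqP; rewrite -subset0 => x [hx].
  rewrite -bigcup_seq => -[L /= Lt Lx].
  have := htr h L x (mem_head _ _) (hmt _ Lt) hx Lx.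
  by move=> e; move: ht; rewrite e Lt.
Qed.

Definition sA M (L : set R) : seq (set R) :=
  enum_fset (fset_set [set L' | D M L' /\ L' `<=` L]).

Lemma sA_fin M L : finite_set [set L' | D M L' /\ L' `<=` L].
Proof. by apply: sub_finite_set (D_fin M) => L' []. Qed.

Lemma mem_sA M L L' : (L' \in sA M L) = `[< D M L' /\ L' `<=` L >].
Proof.
rewrite /sA -[L' \in enum_fset _]/(L' \in fset_set _) in_fset_set; last exact: sA_fin.
by rewrite /mem /= /in_mem /=.
Qed.

Lemma mem_sAP M L L' : L' \in sA M L <-> D M L' /\ L' `<=` L.
Proof. by rewrite mem_sA; split => /asboolP. Qed.

Lemma sA_uniq M L : uniq (sA M L).
Proof. exact: fset_uniq. Qed.

Lemma sA_cover N M L : (N <= M)%N -> D N L ->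
  \big[setU/set0]_(L' <- sA M L) L' = L.
Proof.
move=> NM DL; apply/seteqP; split.
  by move=> x; rewrite -bigcup_seq => -[L' /= /mem_sAP [_ sL] /sL].
move=> x Lx; have x0 := D_sub DL Lx.
have [DM xM] := at_spec M x0.
rewrite -bigcup_seq; exists (at_ M x) => //=.
apply/mem_sAP; split => //.
by rewrite -(at_uniq x0 DL Lx); exact: at_sub.
Qed.

Lemma Ri_sA N M L g : integ g -> (N <= M)%N -> D N L ->
  Ri L g = \sum_(L' <- sA M L) Ri L' g.
Proof.
move=> ig NM DL; rewrite -{1}(sA_cover NM DL) Ri_bigU //.
- exact: fset_uniq.
- move=> L' /mem_sAP [DL' _]; split; [exact: D_meas DL'|exact: D_sub DL'].
- move=> L1 L2 x /mem_sAP[D1 _] /mem_sAP[D2 _] h1 h2; exact: D_triv D1 D2 h1 h2.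
Qed.

Lemma Ri_cst1 L : measurable L -> Ri L (fun=> 1) = mu L.
Proof. by move=> mL; rewrite /Ri Rintegral_cst // mul1r. Qed.

Lemma mu_sA N M L : (N <= M)%N -> D N L -> mu L = \sum_(L' <- sA M L) mu L'.
Proof.
move=> NM DL; rewrite -Ri_cst1; last exact: D_meas DL.
rewrite (Ri_sA (integ_cst 1) NM DL); apply: eq_big_seq => L' /mem_sAP [DL' _].
by rewrite Ri_cst1 //; exact: D_meas DL'.
Qed.


Definition av N x := avg nu (at_ N x) f.
Definition mv N x := avg nu (at_ N x) (fun y => `|f y|).
Definition dd j x := av j.+1 x - av j x.

Lemma integ_f : integ f. Proof. exact: intf. Qed.
Lemma integ_af : integ (fun y => `|f y|). Proof. exact: integ_abs integ_f. Qed.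

Lemma avgE L g : avg nu L g = (mu L)^-1 * Ri L g.
Proof. by []. Qed.

Lemma mu_avg N L g : D N L -> mu L * avg nu L g = Ri L g.
Proof.
move=> DL; rewrite avgE mulrA mulfV ?mul1r //; exact/lt0r_neq0/(mu_pos DL).
Qed.

Lemma Ri_abs_ge0 L : 0 <= Ri L (fun y => `|f y|).
Proof. by apply: Rintegral_ge0 => x _. Qed.

Lemma avg_abs_ge0 N L : D N L -> 0 <= avg nu L (fun y => `|f y|).
Proof.
move=> DL; rewrite avgE mulr_ge0 // ?Ri_abs_ge0 //.
by rewrite invr_ge0; apply/ltW/(mu_pos DL).
Qed.

Lemma Ri_norm_le N L : D N L -> `|Ri L f| <= Ri L (fun y => `|f y|).
Proof.
move=> DL; apply: le_normr_Rintegral; first exact: D_meas DL.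
apply: integS integ_f; [exact: D_meas DL|exact: D_sub DL].
Qed.

Lemma avg_norm_le N L : D N L -> `|avg nu L f| <= avg nu L (fun y => `|f y|).
Proof.
move=> DL; rewrite !avgE normrM ger0_norm; last first.
  by rewrite invr_ge0; apply/ltW/(mu_pos DL).
rewrite ler_wpM2l //; last exact: Ri_norm_le DL.
by rewrite invr_ge0; apply/ltW/(mu_pos DL).
Qed.

Lemma mv_ge0 N x : I0 x -> 0 <= mv N x.
Proof. by move=> x0; apply: avg_abs_ge0 (at_spec N x0).1. Qed.

Lemma av_le N x : I0 x -> `|av N x| <= mv N x.
Proof. by move=> x0; apply: avg_norm_le (at_spec N x0).1. Qed.

Lemma av_sqr_le N x : I0 x -> av N x ^+ 2 <= mv N x ^+ 2.
Proof.
move=> x0; rewrite -real_normK ?num_real // lerXn2r ?nnegrE ?normr_ge0 ?mv_ge0 //.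
exact: av_le.
Qed.

Lemma av_det N x y j : I0 x -> I0 y -> at_ N x = at_ N y -> (j <= N)%N ->
  av j x = av j y /\ mv j x = mv j y.
Proof. by move=> x0 y0 e jN; rewrite /av /mv (at_det x0 y0 e jN). Qed.

Definition crit (s t : nat) x : bool :=
  (4 * mv s x < mv t x) || (96 * mv s x ^+ 2 < \sum_(s <= j < t) dd j x ^+ 2).

Fixpoint lst N x : nat :=
  match N with 0 => 0%N | N'.+1 => if crit (lst N' x) N'.+1 x then N'.+1 else lst N' x end.

Lemma lst_le N x : (lst N x <= N)%N.
Proof.
elim: N => //= N IH; case: ifP => // _; exact: leq_trans IH (leqnSn _).
Qed.

Lemma lst_mono j N x : (j <= N)%N -> (lst j x <= lst N x)%N.
Proof.
elim: N => [|N IH]; first by rewrite leqn0 => /eqP ->.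
rewrite leq_eqVlt => /orP[/eqP -> //|]; rewrite ltnS => /IH h.
rewrite /=; case: ifP => // _; apply: leq_trans h _; apply: leq_trans (lst_le _ _) _.
exact: leqnSn.
Qed.

Lemma lst_fix N x : lst (lst N x) x = lst N x.
Proof.
elim: N => //= N IH; case: ifP => //= c; by rewrite c.
Qed.

Lemma lst_const N j x : (lst N x <= j <= N)%N -> lst j x = lst N x.
Proof.
move=> /andP[sj jN]; apply/eqP; rewrite eqn_leq lst_mono //=.
by rewrite -{1}(lst_fix N x) lst_mono.
Qed.

Lemma crit_det N x y s t : I0 x -> I0 y -> at_ N x = at_ N y ->
  (s <= t)%N -> (t <= N)%N -> crit s t x = crit s t y.
Proof.
move=> x0 y0 e st tN.
have [a1 m1] := av_det x0 y0 e tN.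
have [a2 m2] := av_det x0 y0 e (leq_trans st tN).
rewrite /crit m1 m2; congr (_ || (_ < _)).
apply: eq_big_nat => j /andP[_ jt]; rewrite /dd.
have [b1 _] := av_det x0 y0 e (leq_trans jt tN).
have [b2 _] := av_det x0 y0 e (leq_trans (ltnW jt) tN).
by rewrite b1 b2.
Qed.

Lemma lst_det N x y j : I0 x -> I0 y -> at_ N x = at_ N y -> (j <= N)%N ->
  lst j x = lst j y.
Proof.
move=> x0 y0 e; elim: j => // j IH jN /=.
rewrite IH ?(ltnW jN) // (crit_det x0 y0 e _ jN) //.
by apply: leq_trans (lst_le _ _) (leqnSn _).
Qed.


Definition stopv j x := if lst j x == j then mv j x ^+ 2 else 0.

Lemma dd_sqr_le j x : I0 x -> dd j x ^+ 2 <= 2 * mv j.+1 x ^+ 2 + 2 * mv j x ^+ 2.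
Proof.
move=> x0; have h1 := av_sqr_le j.+1 x0; have h2 := av_sqr_le j x0.
rewrite /dd; have : 0 <= (av j.+1 x + av j x) ^+ 2 by apply: sqr_ge0.
move: h1 h2; set a := av j.+1 x; set b := av j x.
move=> h1 h2 h3; nra.
Qed.

Lemma inv_step N x : I0 x ->
  let s := lst N x in
  [/\ \sum_(j < N) dd j x ^+ 2 <=
        130 * (\sum_(j < N.+1) stopv j x - mv s x ^+ 2) +
        \sum_(s <= j < N) dd j x ^+ 2 + 2 * mv s x ^+ 2,
      \sum_(s <= j < N) dd j x ^+ 2 <= 96 * mv s x ^+ 2 &
      mv N x <= 4 * mv s x].
Proof.
move=> x0; elim: N => [|N IH] /=.
  rewrite big_ord0 big_geq // big_ord_recr big_ord0 /stopv /= add0r subrr mulr0 add0r.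
  split; first by rewrite ?addr0 ?add0r mulr_ge0 // sqr_ge0.
    by rewrite mulr_ge0 // sqr_ge0.
  by have := mv_ge0 0 x0; lra.
case: IH => IH1 IH2 IH3.
set s := lst N x in IH1 IH2 IH3 *.
have ms0 := mv_ge0 s x0.
have sN : (s <= N)%N := lst_le N x.
have hd := dd_sqr_le N x0.
have hN : mv N x ^+ 2 <= 16 * mv s x ^+ 2.
  have := mv_ge0 N x0; nra.
have m1 := mv_ge0 N.+1 x0.
case: ifP => c.
- have l1 : lst N.+1 x = N.+1 by rewrite /= -/s c.
  rewrite ?l1 big_geq // big_ord_recr /= [\sum_(j < N.+2) _]big_ord_recr /=.
  rewrite [stopv N.+1 x]/stopv l1 eqxx.
  set T := \sum_(i < N.+1) _ in IH1 *.
  set P := \sum_(i < N) _ in IH1 *.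
  set Rr := \sum_(s <= j < N) _ in IH1 IH2.
  split.
  + lra.
  + by rewrite mulr_ge0 // sqr_ge0.
  + lra.
- have l1 : lst N.+1 x = s by rewrite /= -/s c.
  have sN1 : (s != N.+1)%N by rewrite neq_ltn ltnS sN.
  rewrite ?l1 big_ord_recr /= [\sum_(j < N.+2) _]big_ord_recr /=.
  rewrite [stopv N.+1 x]/stopv l1 (negbTE sN1) addr0 big_nat_recr //=.
  move: c; rewrite /crit => /negbT; rewrite negb_or -!leNgt => /andP[c1 c2].
  rewrite big_nat_recr //= in c2.
  set T := \sum_(i < N.+1) _ in IH1 *.
  set P := \sum_(i < N) _ in IH1 *.
  set Rr := \sum_(s <= j < N) _ in IH1 IH2 c2 *.
  split.
  + lra.
  + exact: c2.
  + exact: c1.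
Qed.

Lemma partial_bound N x : I0 x ->
  \sum_(j < N) dd j x ^+ 2 <= 130 * \sum_(j < N.+1) stopv j x.
Proof.
move=> x0; case: (inv_step N x0) => h1 h2 _.
have := mv_ge0 (lst N x) x0 => m0.
set T := \sum_(i < N.+1) _ in h1 *.
set P := \sum_(i < N) _ in h1 *.
set Rr := \sum_(_ <= j < N) _ in h1 h2.
have : 0 <= mv (lst N x) x ^+ 2 by apply: sqr_ge0.
lra.
Qed.


Lemma ch_fin p : finite_set (ch D p).
Proof. by apply: sub_finite_set (D_fin p.1.+1) => J []. Qed.

Lemma indic_at N x : I0 x -> \1_(at_ N x) x = 1 :> R.
Proof. by move=> x0; rewrite indicE mem_set //; exact: (at_spec N x0).2. Qed.

Lemma indic_out (J : set R) x : ~ J x -> \1_J x = 0 :> R.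
Proof. by move=> nJ; rewrite indicE memNset. Qed.

Lemma sum_ch x n : I0 x ->
  (\sum_(J \in ch D (n, at_ n x)) condE nu J f x)%R = av n.+1 x.
Proof.
move=> x0.
have chi : ch D (n, at_ n x) (at_ n.+1 x).
  split; [exact: (at_spec n.+1 x0).1|exact: at_sub1].
rewrite (fsbigD1 (at_ n.+1 x)) //; last exact: ch_fin.
rewrite fsbig1; first by rewrite /= addr0 /condE indic_at // mulr1.
move=> J [[DJ sJ] nJ]; rewrite /condE indic_out ?mulr0 // => Jx.
by apply: nJ; rewrite /= (at_uniq x0 DJ Jx).
Qed.

Lemma mdiff_at x n : I0 x -> mdiff nu D (n, at_ n x) f x = dd n x.
Proof. by move=> x0; rewrite /mdiff sum_ch // /condE /= indic_at // mulr1. Qed.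

Lemma mdiff_out x n L : ~ L x -> mdiff nu D (n, L) f x = 0.
Proof.
move=> nL; rewrite /mdiff fsbig1 ?sub0r /condE /= ?indic_out ?mulr0 ?oppr0 //.
by move=> J [_ sJ]; rewrite indic_out ?mulr0 // => /sJ.
Qed.

Lemma esum_sq x : I0 x ->
  (\esum_(p in atoms D) ((mdiff nu D p f x) ^+ 2)%:E)%E =
  (\sum_(0 <= n <oo) ((dd n x) ^+ 2)%:E)%E.
Proof.
move=> x0.
pose e := fun n : nat => (n, at_ n x).
transitivity (\esum_(p in e @` [set: nat]) ((mdiff nu D p f x) ^+ 2)%:E)%E.
  rewrite esum_mkcond [RHS]esum_mkcond; apply: eq_esum => p _.
  case: p => n L.
  case: (pselect (L x)) => Lx.
  - case: (pselect (D n L)) => DL.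
    + have -> : L = at_ n x by rewrite (at_uniq x0 DL Lx).
      rewrite !mem_set //; by [exists n|exact: (at_spec n x0).1].
    + rewrite memNset //; rewrite memNset // => -[m _ [mn eL]].
      by apply: DL; rewrite -eL -mn; exact: (at_spec m x0).1.
  - rewrite mdiff_out // expr0n /= !if_same //.
rewrite esum_set_image //.
- rewrite eseries_mkcond; apply: eq_eseriesr => i _.
  by rewrite in_setT mdiff_at.
- by move=> n _; rewrite lee_fin sqr_ge0.
- by move=> a b _ _ [].
Qed.


Definition Sp : set (nat * set R) :=
  [set p | exists2 x, I0 x & lst p.1 x = p.1 /\ p.2 = at_ p.1 x].

Lemma esum_sparse_ge x : I0 x ->
  (\sum_(0 <= n <oo) (stopv n x)%:E <=
   \esum_(p in Sp) ((avg nu p.2 (fun y => `|f y|)) ^+ 2 * \1_(p.2) x)%:E)%E.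
Proof.
move=> x0.
pose e := fun n : nat => (n, at_ n x).
pose h := fun p : nat * set R => ((avg nu p.2 (fun y => `|f y|)) ^+ 2 * \1_(p.2) x)%:E.
have h0 p : (0 <= h p)%E.
  by rewrite lee_fin mulr_ge0 ?sqr_ge0 // indicE ler0n.
apply: (@le_trans _ _ (\esum_(p in e @` [set n | lst n x = n]) h p)%E).
  rewrite esum_set_image //; last by move=> a b _ _ [].
  rewrite eseries_mkcond [X in (_ <= X)%E]eseries_mkcond.
  rewrite le_eqVlt; apply/orP; left; apply/eqP; apply: eq_eseriesr => i _; rewrite /stopv /h /e /=.
  case: (lst i x =P i) => li.
  - by rewrite mem_set // indic_at // mulr1.
  - by rewrite memNset.
rewrite esum_mkcond [X in (_ <= X)%E]esum_mkcond; apply: le_esum => p _.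
case: ifP => pe; last by case: ifP => // _; exact: (h0 p).
have -> : p \in Sp.
  by apply/mem_set; move: pe; rewrite inE => -[n ln <-]; exists x.
by [].
Qed.

Lemma series_bound x : I0 x ->
  (\sum_(0 <= n <oo) ((dd n x) ^+ 2)%:E <=
   130%:E * \sum_(0 <= n <oo) (stopv n x)%:E)%E.
Proof.
move=> x0.
have st0 n : (0 <= (stopv n x)%:E)%E.
  by rewrite lee_fin /stopv; case: ifP => _; rewrite ?sqr_ge0.
apply: lime_le; first by apply: is_cvg_nneseries => n _ _; rewrite lee_fin sqr_ge0.
apply: nearW => N.
rewrite sumEFin big_mkord.
apply: (@le_trans _ _ (130%:E * \sum_(0 <= n < N.+1) (stopv n x)%:E)%E).
  by rewrite sumEFin big_mkord -EFinM lee_fin partial_bound.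
apply: lee_wpmul2l; first by rewrite lee_fin.
exact: nneseries_lim_ge.
Qed.


Lemma pointwise x : I0 x ->
  (sqfun nu D f x <= (Num.sqrt 130)%:E * sparse_sqfun nu Sp f x)%E.
Proof.
move=> x0; rewrite /sqfun /sparse_sqfun esum_sq //.
have -> : ((Num.sqrt 130)%:E = sqrte (130%:E : \bar R)) by [].
rewrite -sqrteM ?lee_fin // lee_sqrt; last first.
  apply: mule_ge0; rewrite ?lee_fin //; apply: esum_ge0 => p _.
  by rewrite lee_fin mulr_ge0 ?sqr_ge0 // indicE ler0n.
apply: le_trans (series_bound x0) _.
apply: lee_wpmul2l; first by rewrite lee_fin.
exact: esum_sparse_ge.
Qed.


Definition rep (L : set R) : R := xget 0 L.

Lemma rep_in N L : D N L -> L (rep L).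
Proof. by move=> DL; apply: xgetPex; exact: D_nonempty DL. Qed.

Lemma sum_le_one (T : eqType) (s : seq T) (Q : pred T) (c : R) :
  uniq s -> 0 <= c ->
  (forall a b, a \in s -> b \in s -> Q a -> Q b -> a = b) ->
  \sum_(a <- s | Q a) c <= c.
Proof.
move=> us c0 hu; have [/hasP [w ws Qw]|/hasPn nQ] := boolP (has Q s).
  rewrite big_mkcond (bigD1_seq w) //= Qw big1_seq ?addr0 // => a /andP[naw aS].
  case: ifP => // Qa; move: naw; by rewrite (hu a w aS ws Qa Qw) eqxx.
by rewrite big1_seq // => a /andP[Qa /nQ]; rewrite Qa.
Qed.


Lemma sum_eq_one (T : eqType) (s : seq T) (Q : pred T) (c : R) :
  uniq s -> (exists2 w, w \in s & Q w) ->
  (forall a b, a \in s -> b \in s -> Q a -> Q b -> a = b) ->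
  \sum_(a <- s | Q a) c = c.
Proof.
move=> us [w ws Qw] hu.
rewrite big_mkcond (bigD1_seq w) //= Qw big1_seq ?addr0 // => a /andP[naw aS].
case: ifP => // Qa; move: naw; by rewrite (hu a w aS ws Qa Qw) eqxx.
Qed.

Definition subb (A B : set R) : bool := `[< A `<=` B >].

Lemma sA_perm M (L I : set R) : L `<=` I ->
  perm_eq (sA M L) [seq L' <- sA M I | subb L' L].
Proof.
move=> LI; apply: uniq_perm; [exact: sA_uniq|exact/filter_uniq/sA_uniq|].
move=> L'; rewrite mem_filter; apply/idP/idP.
  move=> /mem_sAP [DL' sL]; apply/andP; split; first exact/asboolP.
  apply/mem_sAP; split => //; exact: subset_trans LI.
by move=> /andP[/asboolP sL /mem_sAP [DL' _]]; apply/mem_sAP.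
Qed.

Lemma parent_ex n N I L' : D n I -> (n <= N)%N -> L' \in sA N.+1 I ->
  exists2 L, L \in sA N I & L' `<=` L.
Proof.
move=> DI nN /mem_sAP [DL' sL'].
have [L DL sL] := D_parent DL'.
exists L => //; apply/mem_sAP; split => //.
have [z zL'] := D_nonempty DL'.
have z0 := D_sub DL' zL'.
rewrite -(at_uniq z0 DL (sL _ zL')) -(at_uniq z0 DI (sL' _ zL')).
exact: at_sub.
Qed.

Lemma parent_uniq N M L1 L2 L' : D N L1 -> D N L2 -> D M L' ->
  L' `<=` L1 -> L' `<=` L2 -> L1 = L2.
Proof.
move=> D1 D2 DL' s1 s2; have [z zL'] := D_nonempty DL'.
exact: D_triv D1 D2 (s1 _ zL') (s2 _ zL').
Qed.

Lemma regroup n N I (F : set R -> R) : D n I -> (n <= N)%N ->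
  \sum_(L' <- sA N.+1 I) F L' = \sum_(L <- sA N I) \sum_(L' <- sA N.+1 L) F L'.
Proof.
move=> DI nN.
transitivity (\sum_(L <- sA N I) \sum_(L' <- sA N.+1 I | subb L' L) F L'); last first.
  apply: eq_big_seq => L /mem_sAP [DL LI].
  by rewrite (perm_big _ (sA_perm N.+1 LI)) big_filter.
under [RHS]eq_bigr do rewrite big_mkcond.
rewrite exchange_big /=; apply: eq_big_seq => L' L'in.
rewrite -big_mkcond /= sum_eq_one //; first exact: sA_uniq.
  by have [L Lin sL] := parent_ex DI nN L'in; exists L => //; exact/asboolP.
move=> a b /mem_sAP [Da _] /mem_sAP [Db _] /asboolP sa /asboolP sb.
move: L'in => /mem_sAP [DL' _]; exact: parent_uniq Da Db DL' sa sb.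
Qed.


Lemma kid n x0 t L z : I0 x0 -> lst n x0 = n ->
  chS Sp (n, at_ n x0) (t, L) -> L z ->
  [/\ I0 z, at_ n z = at_ n x0, (n < t)%N, at_ t z = L &
      lst t z = t /\ forall j, (n <= j < t)%N -> lst j z = n].
Proof.
move=> x00 ln [[y y0 /= [lty eL]] [/= nt LI neq] nomax] Lz.
have [z0 etz] : I0 z /\ at_ t z = at_ t y by apply: at_mem y0 _; rewrite -eL.
have etz' : at_ t z = L by rewrite etz eL.
have [Dn _] := at_spec n x00.
have enz : at_ n z = at_ n x0 := at_uniq z0 Dn (LI _ Lz).
have ltz : lst t z = t by rewrite (lst_det z0 y0 etz (leqnn t)).
have lnz : lst n z = n by rewrite (lst_det z0 x00 enz (leqnn n)).
have tn : t != n.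
  apply/eqP => tn; apply: neq; congr pair => //=.
  by rewrite -etz' -enz tn.
have nt' : (n < t)%N by rewrite ltn_neqAle eq_sym tn.
split => //; split => // j /andP[nj jt].
set s := lst j z.
have ns : (n <= s)%N by rewrite -{1}lnz lst_mono.
have sj : (s <= j)%N := lst_le j z.
apply/eqP; rewrite eqn_leq ns andbT leqNgt; apply/negP => ns'.
apply: nomax; exists (s, at_ s z); split.
- by exists z => //=; split => //; rewrite /s lst_fix.
- split => /=.
  + exact: leq_trans sj (ltnW jt).
  + by rewrite -etz'; apply: at_sub => //; exact: leq_trans sj (ltnW jt).
  + case => ts _; move: jt; rewrite ts => /(leq_ltn_trans sj); by rewrite ltnn.
- split => /=.
  + exact: ltnW ns'.
  + by rewrite -enz; apply: at_sub => //; exact: ltnW ns'.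
  + by case => sn _; move: ns'; rewrite sn ltnn.
Qed.


Lemma kid_crit n x0 t L z : I0 x0 -> lst n x0 = n ->
  chS Sp (n, at_ n x0) (t, L) -> L z ->
  crit n t z /\ forall j, (n < j < t)%N -> ~~ crit n j z.
Proof.
move=> x00 ln hK Lz; have [z0 enz nt etz [ltz hj]] := kid x00 ln hK Lz.
split.
  have [t' tE] : exists t', t = t'.+1 by case: (t) nt => // t' _; exists t'.
  subst t; move: ltz => /=; rewrite (hj t'); last by rewrite ltnSn andbT -ltnS.
  by case: ifP => // _ tn; move: nt; rewrite -tn ltnn.
move=> j /andP[nj jt].
have [j' jE] : exists j', j = j'.+1 by case: (j) nj => // j' _; exists j'.
subst j.
have := hj j'.+1; rewrite (ltnW nj) jt => /(_ erefl) /=.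
rewrite (hj j'); last by rewrite (ltn_trans (ltnSn j') jt) andbT -ltnS.
by case: ifP => // _ jn; move: nj; rewrite jn ltnn.
Qed.

Lemma kid_disj n x0 K K' z : I0 x0 -> lst n x0 = n ->
  chS Sp (n, at_ n x0) K -> chS Sp (n, at_ n x0) K' -> K.2 z -> K'.2 z -> K = K'.
Proof.
case: K => t L; case: K' => t' L' x00 ln hK hK' /= Lz L'z.
have [z0 _ nt etz [ltz hj]] := kid x00 ln hK Lz.
have [_ _ nt' etz' [ltz' hj']] := kid x00 ln hK' L'z.
have tt' : t = t'.
  apply/eqP; rewrite eqn_leq; apply/andP; split; rewrite leqNgt; apply/negP => h.
  - have := hj t'; rewrite (ltnW nt') h => /(_ erefl); rewrite ltz' => e.
    by move: nt'; rewrite e ltnn.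
  - have := hj' t; rewrite (ltnW nt) h => /(_ erefl); rewrite ltz => e.
    by move: nt; rewrite e ltnn.
by rewrite -etz -etz' tt'.
Qed.

Fixpoint alive (lam : R) (n j : nat) y : bool :=
  match j with
  | 0 => true
  | j'.+1 => alive lam n j' y && ((j'.+1 <= n)%N || (mv j'.+1 y <= 4 * lam))
  end.

Definition En lam n N y :=
  \sum_(n <= j < N) (if alive lam n j.+1 y then dd j y ^+ 2 else 0).

Lemma alive_le lam n j y : (j <= n)%N -> alive lam n j y.
Proof.
elim: j => //= j IH jn; rewrite IH ?jn //; exact: ltnW.
Qed.

Lemma alive_mono lam n j N y : (j <= N)%N -> alive lam n N y -> alive lam n j y.
Proof.
elim: N => [|N IH]; first by rewrite leqn0 => /eqP ->.
rewrite leq_eqVlt => /orP[/eqP -> //|]; rewrite ltnS => jN /= /andP[h _].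
exact: IH.
Qed.

Lemma alive_mv lam n j y : (n < j)%N -> alive lam n j y -> mv j y <= 4 * lam.
Proof.
case: j => // j nj /= /andP[_]; by rewrite leqNgt nj.
Qed.

Lemma alive_det lam n N x y j : I0 x -> I0 y -> at_ N x = at_ N y -> (j <= N)%N ->
  alive lam n j x = alive lam n j y.
Proof.
move=> x0 y0 e; elim: j => // j IH jN /=.
rewrite IH ?(ltnW jN) //; have [_ ->] := av_det x0 y0 e jN; by [].
Qed.

Lemma En_det lam n N x y : I0 x -> I0 y -> at_ N x = at_ N y ->
  En lam n N x = En lam n N y.
Proof.
move=> x0 y0 e; apply: eq_big_nat => j /andP[_ jN].
rewrite (alive_det lam n x0 y0 e jN) /dd.
have [-> _] := av_det x0 y0 e jN.
by have [-> _] := av_det x0 y0 e (ltnW jN).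
Qed.

Lemma En_S lam n N y : (n <= N)%N ->
  En lam n N.+1 y = En lam n N y + (if alive lam n N.+1 y then dd N y ^+ 2 else 0).
Proof. by move=> nN; rewrite /En big_nat_recr. Qed.

Lemma En_ge0 lam n N y : 0 <= En lam n N y.
Proof. by apply: sumr_ge0 => j _; case: ifP => _; rewrite ?sqr_ge0. Qed.

Lemma En_mono lam n N M y : (n <= N)%N -> (N <= M)%N -> En lam n N y <= En lam n M y.
Proof.
move=> nN; elim: M => [|M IH]; first by rewrite leqn0 => /eqP ->.
rewrite leq_eqVlt => /orP[/eqP -> //|]; rewrite ltnS => NM.
rewrite En_S ?(leq_trans nN NM) //; apply: le_trans (IH NM) _.
by rewrite lerDl; case: ifP => _; rewrite ?sqr_ge0.
Qed.


Section Energy.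
Variables (n : nat) (I : set R).
Hypothesis DI : D n I.
Let lam := avg nu I (fun y => `|f y|).

Lemma lam_ge0 : 0 <= lam.
Proof. exact: avg_abs_ge0 DI. Qed.

Definition psi N L :=
  let r := rep L in
  mu L * En lam n N r - (if alive lam n N r then mu L * av N r ^+ 2 else 0)
  - 8 * lam * (if alive lam n N r then 0 else Ri L (fun y => `|f y|)).

Lemma repI N L : (n <= N)%N -> L \in sA N I ->
  [/\ I0 (rep L), at_ N (rep L) = L, at_ n (rep L) = I & D N L].
Proof.
move=> nN /mem_sAP [DL LI]; have rL := rep_in DL; have r0 := D_sub DL rL.
split => //; [exact: at_uniq r0 DL rL|exact: at_uniq r0 DI (LI _ rL)].
Qed.

Lemma alive_bound N y : (n <= N)%N -> I0 y -> at_ n y = I ->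
  alive lam n N y -> mv N y <= 4 * lam.
Proof.
move=> nN y0 eny al; have [nN'|] := ltnP n N; first exact: alive_mv al.
move=> Nn; have -> : N = n by apply/eqP; rewrite eqn_leq Nn nN.
rewrite /mv eny -/lam; have := lam_ge0; lra.
Qed.

Lemma psi_child N L L' : (n <= N)%N -> L \in sA N I -> L' \in sA N.+1 L ->
  psi N.+1 L' <=
  (if alive lam n N (rep L) then
     mu L' * (En lam n N (rep L) + av N (rep L) ^+ 2) - 2 * av N (rep L) * Ri L' f
   else mu L' * En lam n N (rep L) - 8 * lam * Ri L' (fun y => `|f y|)).
Proof.
move=> nN Lin L'in.
have [r0 erL enr DL] := repI nN Lin.
have /mem_sAP [DL' L'L] := L'in.
have r'L' := rep_in DL'; have r'0 := D_sub DL' r'L'.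
have er'L : at_ N (rep L') = L := at_uniq r'0 DL (L'L _ r'L').
have e : at_ N (rep L') = at_ N (rep L) by rewrite er'L erL.
have er' : at_ N.+1 (rep L') = L' := at_uniq r'0 DL' r'L'.
have [ea _] := av_det r'0 r0 e (leqnn N).
have eal := alive_det lam n r'0 r0 e (leqnn N).
have eE := En_det lam n r'0 r0 e.
rewrite /psi /= En_S //= eE eal /dd ea.
have ha' : mu L' * av N.+1 (rep L') = Ri L' f by rewrite /av er'; exact: mu_avg DL'.
have hRi : `|Ri L' f| <= Ri L' (fun y => `|f y|) := Ri_norm_le DL'.
have hRi0 : 0 <= Ri L' (fun y => `|f y|) := Ri_abs_ge0 L'.
have mu'0 : 0 < mu L' := mu_pos DL'.
set a := av N (rep L) in ea *; set a' := av N.+1 (rep L') in ha' *.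
set E0 := En lam n N (rep L).
case al : (alive lam n N (rep L)) => /=; first last.
  by rewrite addr0 subr0.
have ha : `|a| <= 4 * lam.
  apply: le_trans (av_le _ r0) _; apply: alive_bound => //.
have l0 := lam_ge0.
rewrite (_ : (N < n)%N = false) /=; last by rewrite ltnNge nN.
case: ifP => _ /=.
- rewrite mulr0 subr0 -ha'; set m := mu L'; nra.
- rewrite addr0 subr0.
  have h1 : a * Ri L' f <= `|a| * `|Ri L' f| by rewrite -normrM ler_norm.
  have h2 := normr_ge0 a; have h3 := normr_ge0 (Ri L' f).
  have : 0 <= mu L' * a ^+ 2 by rewrite mulr_ge0 ?sqr_ge0 // ltW.
  nra.
Qed.

Lemma psi_step N L : (n <= N)%N -> L \in sA N I ->
  \sum_(L' <- sA N.+1 L) psi N.+1 L' <= psi N L.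
Proof.
move=> nN Lin.
have [r0 erL enr DL] := repI nN Lin.
apply: le_trans.
  rewrite big_seq; apply: ler_sum => L' L'in; exact: psi_child nN Lin L'in.
rewrite -big_seq.
have hmu := mu_sA (leqnSn N) DL.
have hRf := Ri_sA integ_f (leqnSn N) DL.
have hRa := Ri_sA integ_af (leqnSn N) DL.
have ha : mu L * av N (rep L) = Ri L f by rewrite /av erL; exact: mu_avg DL.
rewrite /psi /=.
set a := av N (rep L) in ha *; set E0 := En lam n N (rep L).
case: (alive lam n N (rep L)).
- rewrite sumrB -mulr_sumr -mulr_suml -hmu -hRf -ha.
  rewrite le_eqVlt; apply/orP; left; apply/eqP; ring.
- rewrite sumrB -mulr_sumr -mulr_suml -hmu -hRa.
  rewrite le_eqVlt; apply/orP; left; apply/eqP; ring.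
Qed.

Lemma psi_base N L : N = n -> L \in sA N I -> psi N L <= 0.
Proof.
move=> Nn Lin; have [r0 erL enr DL] := repI (eq_leq (esym Nn)) Lin.
have al : alive lam n N (rep L) by apply: alive_le; rewrite Nn.
rewrite /psi /= al /En big_geq ?Nn // mulr0 mulr0 subr0 sub0r.
by rewrite oppr_le0 mulr_ge0 ?sqr_ge0 // ltW // (mu_pos DL).
Qed.

Lemma Phi_le N : (n <= N)%N -> \sum_(L <- sA N I) psi N L <= 0.
Proof.
elim: N => [|N IH] nN.
  rewrite big_seq; apply: sumr_le0 => L Lin; apply: psi_base Lin.
  by apply/eqP; rewrite eqn_leq nN.
move: nN; rewrite leq_eqVlt => /orP[/eqP nE|].
  rewrite big_seq; apply: sumr_le0 => L Lin; exact: psi_base Lin.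
rewrite ltnS => nN; rewrite (regroup _ DI nN).
apply: le_trans (IH nN); rewrite big_seq [X in _ <= X]big_seq.
apply: ler_sum => L Lin; exact: psi_step.
Qed.

Lemma energy_bound N : (n <= N)%N ->
  \sum_(L <- sA N I) mu L * En lam n N (rep L) <= 24 * lam ^+ 2 * mu I.
Proof.
move=> nN.
have hmu := mu_sA nN DI.
have hRa := Ri_sA integ_af nN DI.
have hI : mu I * lam = Ri I (fun y => `|f y|) by exact: mu_avg DI.
have l0 := lam_ge0.
apply: (@le_trans _ _ (\sum_(L <- sA N I) (psi N L + 16 * lam ^+ 2 * mu L
    + 8 * lam * Ri L (fun y => `|f y|)))).
  rewrite big_seq [X in _ <= X]big_seq; apply: ler_sum => L Lin.
  have [r0 erL enr DL] := repI nN Lin.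
  have m0 := mu_pos DL; have R0 := Ri_abs_ge0 L.
  rewrite /psi /=; case al: (alive lam n N (rep L)).
  - have hb := alive_bound nN r0 enr al.
    have ha := av_sqr_le N r0.
    have hm0 := mv_ge0 N r0.
    have : mv N (rep L) ^+ 2 <= 16 * lam ^+ 2 by nra.
    set b := av N (rep L) ^+ 2 in ha *; set c := mv N (rep L) ^+ 2 in ha *.
    nra.
  - have : 0 <= lam * Ri L (fun y => `|f y|) by rewrite mulr_ge0.
    have : 0 <= lam ^+ 2 * mu L by rewrite mulr_ge0 ?sqr_ge0 ?ltW.
    lra.
rewrite big_split big_split /= -mulr_sumr -mulr_sumr -hmu -hRa -hI.
have := Phi_le nN; have : 0 <= lam ^+ 2 * mu I.
  by rewrite mulr_ge0 ?sqr_ge0 // ltW // (mu_pos DI).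
set P := \sum_(i <- _) _; nra.
Qed.

End Energy.


Lemma sum_ge_term (T : eqType) (s : seq T) (F : T -> R) w :
  uniq s -> w \in s -> (forall a, a \in s -> 0 <= F a) -> F w <= \sum_(a <- s) F a.
Proof.
move=> us ws F0; rewrite (bigD1_seq w) //= lerDl big_seq_cond sumr_ge0 // => a /andP[aS _].
exact: F0.
Qed.

Lemma Ri_le_atom n I j z : D n I -> I0 z -> at_ n z = I -> (n <= j)%N ->
  Ri (at_ j z) (fun y => `|f y|) <= Ri I (fun y => `|f y|).
Proof.
move=> DI z0 enz nj; rewrite (Ri_sA integ_af nj DI).
apply: (@sum_ge_term _ (sA j I) (fun L => Ri L (fun y => `|f y|)) (at_ j z)); first exact: sA_uniq.
  apply/mem_sAP; split; first exact: (at_spec j z0).1.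
  by rewrite -enz; exact: at_sub.
by move=> a _; exact: Ri_abs_ge0.
Qed.

Lemma mv_lam0 n I j z : D n I -> I0 z -> at_ n z = I -> (n <= j)%N ->
  avg nu I (fun y => `|f y|) = 0 -> mv j z = 0 /\ av j z = 0.
Proof.
move=> DI z0 enz nj l0.
have hI : Ri I (fun y => `|f y|) = 0.
  by rewrite -(mu_avg _ DI) l0 mulr0.
have Dj := (at_spec j z0).1.
have hj : Ri (at_ j z) (fun y => `|f y|) = 0.
  apply/eqP; rewrite eq_le Ri_abs_ge0 andbT -hI; exact: (Ri_le_atom DI z0 enz nj).
have hm : mv j z = 0 by rewrite /mv avgE hj mulr0.
split => //; apply/eqP; rewrite -normr_eq0 eq_le normr_ge0 andbT -hm.
exact: av_le.
Qed.

Lemma kid_lam0 n x0 K : I0 x0 -> lst n x0 = n ->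
  avg nu (at_ n x0) (fun y => `|f y|) = 0 -> ~ chS Sp (n, at_ n x0) K.
Proof.
case: K => t L x00 ln l0 hK.
have [Dn _] := at_spec n x00.
have [[y y0 /= [_ eL]] _ _] := hK.
have [z Lz] : exists z, L z by exists y; rewrite eL; exact: (at_spec t y0).2.
have [z0 enz nt _ _] := kid x00 ln hK Lz.
have [c _] := kid_crit x00 ln hK Lz.
move: c; rewrite /crit.
have [mn _] := mv_lam0 Dn z0 enz (leqnn n) l0.
have [mt _] := mv_lam0 Dn z0 enz (ltnW nt) l0.
rewrite mn mt mulr0 ltxx /= expr0n /= mulr0.
rewrite big_nat big1 ?ltxx // => j /andP[nj jt].
have [_ a1] := mv_lam0 Dn z0 enz (leq_trans nj (leqnSn j)) l0.
have [_ a2] := mv_lam0 Dn z0 enz nj l0.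
by rewrite /dd a1 a2 subrr expr0n.
Qed.


Lemma alive_kid n x0 t L z : I0 x0 -> lst n x0 = n ->
  chS Sp (n, at_ n x0) (t, L) -> L z -> ~~ (4 * mv n x0 < mv t z) ->
  forall j, (j <= t)%N -> alive (mv n x0) n j z.
Proof.
move=> x00 ln hK Lz nT1.
have [z0 enz nt _ _] := kid x00 ln hK Lz.
have [_ hnc] := kid_crit x00 ln hK Lz.
have [_ mnz] := av_det z0 x00 enz (leqnn n).
elim => // j IH jt /=; rewrite IH ?(ltnW jt) //=.
case: (leqP j.+1 n) => //= nj.
move: jt; rewrite leq_eqVlt => /orP[/eqP jt|jt].
  by move: nT1; rewrite -jt -leNgt.
have := hnc j.+1; rewrite nj jt => /(_ erefl).
by rewrite /crit negb_or mnz -leNgt => /andP[].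
Qed.

Lemma En_kid n x0 t L z : I0 x0 -> lst n x0 = n ->
  chS Sp (n, at_ n x0) (t, L) -> L z -> ~~ (4 * mv n x0 < mv t z) ->
  96 * mv n x0 ^+ 2 < En (mv n x0) n t z.
Proof.
move=> x00 ln hK Lz nT1.
have [z0 enz nt _ _] := kid x00 ln hK Lz.
have [c _] := kid_crit x00 ln hK Lz.
have [_ mnz] := av_det z0 x00 enz (leqnn n).
have al := alive_kid x00 ln hK Lz nT1.
rewrite /En big_nat_cond (eq_bigr (fun j => dd j z ^+ 2)); last first.
  by move=> j /andP[/andP[_ jt] _]; rewrite al.
rewrite -big_nat_cond.
move: c; rewrite /crit mnz; case/orP => // h.
by move: nT1; rewrite h.
Qed.

Lemma disj_sum N (Xs : seq (nat * set R)) (P : pred (nat * set R)) (I : set R)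
    (G : set R -> R) :
  uniq Xs -> (forall L, 0 <= G L) ->
  (forall K, K \in Xs -> K.2 `<=` I) ->
  (forall K K' z, K \in Xs -> K' \in Xs -> K.2 z -> K'.2 z -> K = K') ->
  \sum_(K <- Xs | P K) \sum_(L <- sA N K.2) G L <= \sum_(L <- sA N I) G L.
Proof.
move=> uX G0 XI Xd.
have -> : \sum_(K <- Xs | P K) \sum_(L <- sA N K.2) G L =
    \sum_(K <- Xs | P K) \sum_(L <- sA N I) (if subb L K.2 then G L else 0).
  rewrite big_seq_cond [RHS]big_seq_cond; apply: eq_bigr => K /andP[Kin _].
  by rewrite (perm_big _ (sA_perm N (XI K Kin))) big_filter big_mkcond.
rewrite exchange_big /= big_seq [X in _ <= X]big_seq; apply: ler_sum => L Lin.
rewrite -big_mkcondr /=; apply: sum_le_one => //.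
move=> a b ain bin /andP[_ /asboolP sa] /andP[_ /asboolP sb].
have /mem_sAP [DL _] := Lin; have [z Lz] := D_nonempty DL.
exact: Xd ain bin (sa _ Lz) (sb _ Lz).
Qed.


Lemma sparse_bound n x0 : I0 x0 -> lst n x0 = n ->
  (\esum_(K in chS Sp (n, at_ n x0)) nu K.2 <= (2^-1)%:E * nu (at_ n x0))%E.
Proof.
move=> x00 ln.
have DI := (at_spec n x00).1.
have l0 : 0 <= mv n x0 := mv_ge0 n x00.
have nuI0 : (0 <= nu (at_ n x0))%E by [].
case: (eqVneq (mv n x0) 0) => [lz|lnz].
  rewrite esum1; first by rewrite mule_ge0 // lee_fin invr_ge0.
  by move=> K hK; exfalso; exact: (kid_lam0 x00 ln lz hK).
have lpos : 0 < mv n x0 by rewrite lt_neqAle eq_sym lnz l0.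
apply: ge_ereal_sup => _ [X [finX XS] <-].
rewrite fsbig_finite //=.
set Xs := enum_fset (fset_set X).
have memX K : K \in Xs -> chS Sp (n, at_ n x0) K.
  move=> KX; apply: XS; move: KX.
  by rewrite -[K \in Xs]/(K \in fset_set X) in_fset_set // inE.
have Kfacts K : K \in Xs ->
    [/\ D K.1 K.2, K.2 `<=` at_ n x0, (n < K.1)%N & exists z, K.2 z].
  move=> /memX hK; case: K hK => t L hK.
  have [[y y0 /= [_ eL]] [_ LI _] _] := hK.
  have Lz : L y by rewrite eL; exact: (at_spec t y0).2.
  have [_ _ nt _ _] := kid x00 ln hK Lz.
  by split => //=; [rewrite eL; exact: (at_spec t y0).1|exists y].
rewrite (eq_big_seq (fun K => (mu K.2)%:E)); last first.
  move=> K /Kfacts [DK _ _ _]; by rewrite /mu fineK //; exact: D_fin_num DK.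
rewrite sumEFin /mu -[in X in (_ <= _ * X)%E](fineK (D_fin_num DI)) -EFinM lee_fin.
rewrite -/(mu _).
have -> : \sum_(i <- Xs) fine (nu i.2) = \sum_(i <- Xs) mu i.2 by [].
set lam := mv n x0.
set N := maxn n (\max_(K <- Xs) K.1).
have nN : (n <= N)%N by rewrite leq_maxl.
have KN K : K \in Xs -> (K.1 <= N)%N.
  move=> KX; apply: leq_trans (leq_maxr _ _).
  exact: (@leq_bigmax_seq _ Xs predT (fun K => K.1) K KX).
have uX : uniq Xs := fset_uniq _.
have XI K : K \in Xs -> K.2 `<=` at_ n x0 by case/Kfacts.
have Xd K K' z : K \in Xs -> K' \in Xs -> K.2 z -> K'.2 z -> K = K'.
  move=> /memX hK /memX hK' Kz K'z; exact: kid_disj x00 ln hK hK' Kz K'z.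
have hIa : mu (at_ n x0) * lam = Ri (at_ n x0) (fun y => `|f y|) by exact: mu_avg DI.
rewrite (bigID (fun K => 4 * lam < avg nu K.2 (fun y => `|f y|))) /=.
set S1 := \sum_(i <- Xs | _) _; set S2 := \sum_(i <- Xs | ~~ _) _.
have B1 : S1 * (4 * lam) <= lam * mu (at_ n x0).
  rewrite /S1 mulr_suml.
  apply: (@le_trans _ _ (\sum_(K <- Xs | 4 * lam < avg nu K.2 (fun y => `|f y|))
            \sum_(L <- sA N K.2) Ri L (fun y => `|f y|))).
    rewrite big_seq_cond [X in _ <= X]big_seq_cond; apply: ler_sum => K /andP[KX T1].
    have [DK _ _ _] := Kfacts K KX.
    rewrite -(Ri_sA integ_af (KN K KX) DK) -(mu_avg _ DK).
    by rewrite ler_pM2l ?(mu_pos DK) // ltW.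
  apply: le_trans (disj_sum _ _ uX _ XI Xd) _; first by move=> L; exact: Ri_abs_ge0.
  by rewrite -(Ri_sA integ_af nN DI) -hIa mulrC.
have B2 : S2 * (96 * lam ^+ 2) <= 24 * lam ^+ 2 * mu (at_ n x0).
  rewrite /S2 mulr_suml.
  apply: (@le_trans _ _ (\sum_(K <- Xs | ~~ (4 * lam < avg nu K.2 (fun y => `|f y|)))
            \sum_(L <- sA N K.2) mu L * En lam n N (rep L))).
    rewrite big_seq_cond [X in _ <= X]big_seq_cond; apply: ler_sum => K /andP[KX nT1].
    have [DK _ _ _] := Kfacts K KX.
    rewrite (mu_sA (KN K KX) DK) mulr_suml big_seq [X in _ <= X]big_seq.
    apply: ler_sum => L Lin; have /mem_sAP [DL LK] := Lin.
    rewrite ler_pM2l ?(mu_pos DL) //.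
    have zL := rep_in DL; have Kz := LK _ zL.
    move: (memX K KX) (KN K KX) nT1 Kz; case: K {KX DK LK Lin} => t L' hK Kt nT1 Kz.
    have [z0 enz nt etz _] := kid x00 ln hK Kz.
    have nT1' : ~~ (4 * mv n x0 < mv t (rep L)) by rewrite /mv etz.
    apply/ltW/(lt_le_trans (En_kid x00 ln hK Kz nT1')).
    apply: En_mono; first exact: ltnW.
    exact: Kt.
  apply: le_trans (disj_sum _ _ uX _ XI Xd) _.
    by move=> L; rewrite mulr_ge0 ?En_ge0 // fine_ge0.
  exact: (energy_bound DI nN).
have l2 : 0 < lam ^+ 2 by rewrite exprn_gt0.
have h1 : 4 * S1 - mu (at_ n x0) <= 0.
  rewrite -(pmulr_rle0 _ lpos).
  have -> : lam * (4 * S1 - mu (at_ n x0)) = S1 * (4 * lam) - lam * mu (at_ n x0) by ring.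
  by rewrite subr_le0.
have h2 : 4 * S2 - mu (at_ n x0) <= 0.
  rewrite -(pmulr_rle0 _ l2).
  have -> : lam ^+ 2 * (4 * S2 - mu (at_ n x0)) =
    (S2 * (96 * lam ^+ 2) - 24 * lam ^+ 2 * mu (at_ n x0)) / 24 by field.
  by rewrite pmulr_lle0 ?invr_gt0 // subr_le0.
lra.
Qed.

End Proof.


Unset Implicit Arguments.

Theorem lemma8p1 (R : realType) :
  exists C : R,
  forall (nu : probability R R) (D : nat -> set (set R)) (f : R -> R),
    nu I0 = 1%E ->
    atomic_filtration nu D ->
    nu.-integrable I0 (EFin \o f) ->
    exists S : set (nat * set R),
      sparse nu D S /\
      {ae nu, forall x, I0 x -> (sqfun nu D f x <= C%:E * sparse_sqfun nu S f x)%E}.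
Proof.
exists (Num.sqrt 130) => nu D f _ hD intf.
exists (Sp nu D f); split.
- split.
  + move=> p [x x0 [lp ep]]; rewrite /atoms /= ep; exact: (at_spec hD p.1 x0).1.
  + case=> n I [x0 x00 /= [ln eI]]; rewrite eI; exact: sparse_bound.
- by apply: aeW => x x0; exact: pointwise.
Qed.
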